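(* Let $2\le n<d$ with $n=2$ or $n$ odd, let $n'=\min\{2n-1,d\}$, let $t$ be as defined below, let $E\in\mathrm{SL}(d,q)$ and put $T:=t^E=E^{-1}tE$. Suppose $T$ is a weak doubling element. Then: (1) $\dim(V_n\cap \mathrm{Fix}(T))\ge 1$, and if $n'<d$ then $\dim(V_n\cap\mathrm{Fix}(T))=1$; (2) if $n'<d$, then $\dim(F_{d-n}\cap \mathrm{Fix}(T))=d-n'$.
   Context: Vectors are row vectors and matrices act from the right; $\mathrm{Fix}(g)=\{x\in\mathbb{F}_q^d: xg=x\}$. $e_1,\dots,e_d$ is the standard basis of $V=\mathbb{F}_q^d$, $V_n=\langle e_1,\dots,e_n\rangle$, $F_{d-n}=\langle e_{n+1},\dots,e_d\rangle$, and $n'=\min\{2n-1,d\}$. An element $c\in\mathrm{GL}(d,q)$ is a weak doubling element if (C1) $\dim(V_n+V_nc)=n'$ and (C2) if $n'<d$ then $\dim(F_{d-n}+\mathrm{Fix}(c))=d$. $E_{i,j}(\lambda)$ is the identity matrix with $(i,j)$ entry replaced by $\lambda$ ($i\ne j$). The element $t$ is: $E_{1,2}(1)$ if $n=2$; $\operatorname{diag}(z_1,I_{d-n})$ if $n>2$ and $p=2$; $\operatorname{diag}(z_2,I_{d-n})$ if $n>2$ and $p$ odd, where ($P_\sigma$ being the $n\times n$ matrix with $e_iP_\sigma=e_{\sigma(i)}$) $z_1=P_{(1,n,n-1,\dots,2)}$ with $(1,n)$ entry changed to $-1$ if $n$ is even, and $z_2=P_{(2,n,n-1,\dots,3)}$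 with $(2,n)$ entry changed to $-1$ if $n$ is odd. In particular $\dim\mathrm{Fix}(t)=d-n+1$. *)

(* Defs.v *)
(* Matrices act on row vectors from the right, as in the paper.
   Indices are 0-based: e_{i+1} of the paper is the i-th basis row vector. *)
From HB Require Import structures.
From mathcomp Require Import all_boot all_order all_algebra all_fingroup all_field.
Set Implicit Arguments. Unset Strict Implicit. Unset Printing Implicit Defensive.
Import GRing.Theory.
Local Open Scope ring_scope.

Section Defs.
Variables (F : finFieldType) (d : nat).

Definition Fix (g : 'M[F]_d) : 'M[F]_d := kermx (g - 1%:M).

(* V_n = <e_1,...,e_n>,  F_{d-n} = <e_{n+1},...,e_d> *)
Definition Vn (n : nat) : 'M[F]_d := pid_mx n.
Definition Fdn (n : nat) : 'M[F]_d := copid_mx n.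

Definition nprime (n : nat) : nat := minn (2 * n - 1) d.

Definition weak_doubling (n : nat) (c : 'M[F]_d) : Prop :=
  c \in unitmx /\
  \rank (Vn n + Vn n *m c)%MS = nprime n /\
  (nprime n < d -> \rank (Fdn n + Fix c)%MS = d)%N.

(* z1 (0-based): sigma(0)=n-1, sigma(i)=i-1 for 1<=i<n; entry (0,n-1) is -1 if n even *)
Definition z1_entry (n i j : nat) : F :=
  if i == 0%N then (if j == n.-1 then (if ~~ odd n then -1 else 1) else 0)
  else (if j == i.-1 then 1 else 0).

(* z2 (0-based): sigma(0)=0, sigma(1)=n-1, sigma(i)=i-1 for 2<=i<n;
   entry (1,n-1) is -1 if n odd *)
Definition z2_entry (n i j : nat) : F :=
  if i == 0%N then (if j == 0%N then 1 else 0)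
  else if i == 1%N then (if j == n.-1 then (if odd n then -1 else 1) else 0)
  else (if j == i.-1 then 1 else 0).

Definition t_elt (n : nat) : 'M[F]_d :=
  \matrix_(i < d, j < d)
    if n == 2%N then
      (if (nat_of_ord i == 0%N) && (nat_of_ord j == 1%N) then 1
       else (i == j)%:R)
    else if (i < n)%N && (j < n)%N then
      (if 2 \in [pchar F] then z1_entry n i j else z2_entry n i j)
    else (i == j)%:R.

End Defs.

(* Main.v *)
Require Import Defs.
From HB Require Import structures.
From mathcomp Require Import all_boot all_order all_algebra all_fingroup all_field.
From mathcomp Require Import zify.
Import GRing.Theory.
Local Open Scope ring_scope.

Lemma pid_copid0 (F : fieldType) m d n (X : 'M[F]_(m, d)) : (n <= d)%N ->
  (X <= (pid_mx n : 'M_d))%MS -> (X <= (copid_mx n : 'M_d))%MS -> X = 0.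
Proof.
move=> nd /submxP [D ->] /submxP [D' e].
have h : D *m (pid_mx n : 'M_d) *m (pid_mx n : 'M_d) = D *m (pid_mx n : 'M_d) by rewrite -mulmxA pid_mx_id.
by rewrite -h e -mulmxA mul_copid_mx_pid // mulmx0.
Qed.

Lemma mulmx_pidE (F : fieldType) m d n (A : 'M[F]_(m, d)) i j :
  (A *m (pid_mx n : 'M_d)) i j = if (nat_of_ord j < n)%N then A i j else 0.
Proof.
rewrite mxE (bigD1 j) //= big1 ?addr0.
  by rewrite mxE eqxx /=; case: ifP; rewrite ?mulr1 ?mulr0.
move=> k nk; rewrite mxE.
have -> : (nat_of_ord k == nat_of_ord j) = false by apply/negbTE.
by rewrite mulr0.
Qed.

Lemma pid_mulmxE (F : fieldType) d p n (A : 'M[F]_(d, p)) i j :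
  ((pid_mx n : 'M_d) *m A) i j = if (nat_of_ord i < n)%N then A i j else 0.
Proof.
rewrite mxE (bigD1 i) //= big1 ?addr0.
  by rewrite mxE eqxx /=; case: ifP; rewrite ?mul1r ?mul0r.
move=> k nk; rewrite mxE.
have -> : (nat_of_ord i == nat_of_ord k) = false by apply/negbTE; rewrite eq_sym.
by rewrite mul0r.
Qed.

Lemma ker_rank (F : fieldType) d n (M : 'M[F]_d) (u : 'rV[F]_d) :
  (n <= d)%N -> u != 0 -> (forall j : 'I_d, (n <= j)%N -> u 0 j = 0) ->
  (forall i j : 'I_d, (n <= i)%N -> M i j = 0) ->
  u *m M = 0 ->
  (forall v : 'rV[F]_d, v *m M = 0 ->
     exists c, forall j : 'I_d, (j < n)%N -> v 0 j = c * u 0 j) ->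
  \rank (kermx M) = (d - n).+1.
Proof.
move=> nd u0 uz Mz uM kerP.
have upid : u = u *m (pid_mx n : 'M_d).
  apply/rowP => j; rewrite mulmx_pidE; case: ltnP => // hj; by rewrite uz.
have Mpid : M = (pid_mx n : 'M_d) *m M.
  apply/matrixP => i j; rewrite pid_mulmxE; case: ltnP => // hi; by rewrite Mz.
have sub1 : (copid_mx n + u <= kermx M)%MS.
  rewrite addsmx_sub !sub_kermx uM eqxx andbT Mpid mulmxA.
  by rewrite mul_copid_mx_pid // mul0mx.
have sub2 : (kermx M <= copid_mx n + u)%MS.
  apply/row_subP => i; set v := row i (kermx M).
  have vM : v *m M = 0 by rewrite /v -row_mul mulmx_ker row0.
  have [c hc] := kerP v vM; clearbody v.
  have -> : v = v *m copid_mx n + c *: u.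
    apply/rowP => j; have E1 := @mulmx_pidE _ _ _ n v 0 j; rewrite [LHS]mxE in E1.
    rewrite /copid_mx mulmxBr mulmx1 !mxE E1.
    case: ltnP => hj; first by rewrite hc // subrr add0r.
    by rewrite uz // mulr0 addr0 subr0.
  by apply: addmx_sub_adds; [apply: submxMl | apply: scalemx_sub].
have -> : \rank (kermx M) = \rank (copid_mx n + u)%MS.
  by apply/eqP; rewrite eqn_leq !mxrankS.
rewrite mxrank_disjoint_sum ?rank_copid_mx //.
  have ru : \rank u = 1%N.
    apply/eqP; rewrite eqn_leq rank_leq_row lt0n mxrank_eq0 //.
  by rewrite ru addn1.
apply: (@pid_copid0 _ _ _ _ _ nd); first by apply: submx_trans (capmxSr _ _) _; rewrite upid submxMl.
exact: capmxSl.
Qed.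

Ltac crush := repeat (first [case: ifP => /eqP ? | case: eqP => ?]);
  try lia; try done; try by rewrite ?mul1r ?mul0r ?mulr1 ?mulr0.

Lemma t_z1 (F : finFieldType) d n (i j : 'I_d) : (3 <= n)%N -> odd n -> 2 \in [pchar F] -> (j < n)%N ->
  t_elt F d n i j = ((nat_of_ord i == (if nat_of_ord j == n.-1 then 0 else (nat_of_ord j).+1))%N)%:R * 1.
Proof.
move=> n3 on p2 jn; rewrite mulr1 /t_elt mxE.
have -> : (i == j) = (nat_of_ord i == nat_of_ord j)%N by [].
have -> : (n == 2%N) = false by apply/negbTE/eqP; lia.
rewrite jn andbT p2 /z1_entry on /=.
case: (ltnP i n) => hi /=; crush.
Qed.

Lemma t_z2 (F : finFieldType) d n (i j : 'I_d) : (3 <= n)%N -> odd n -> 2 \notin [pchar F] -> (j < n)%N ->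
  t_elt F d n i j = ((nat_of_ord i == (if nat_of_ord j == 0%N then 0 else if nat_of_ord j == n.-1 then 1 else (nat_of_ord j).+1))%N)%:R
     * (if nat_of_ord j == n.-1 then -1 else 1).
Proof.
move=> n3 on p2 jn; rewrite /t_elt mxE.
have -> : (i == j) = (nat_of_ord i == nat_of_ord j)%N by [].
have -> : (n == 2%N) = false by apply/negbTE/eqP; lia.
rewrite jn andbT (negbTE p2) /z2_entry on /=.
case: (ltnP i n) => hi /=; crush.
Qed.

Lemma t_out (F : finFieldType) d n (i j : 'I_d) : (2 <= n)%N -> ((n <= i) || (n <= j))%N ->
  t_elt F d n i j = ((nat_of_ord i == nat_of_ord j)%N)%:R.
Proof.
move=> n2 h; rewrite /t_elt mxE.
have -> : (i == j) = (nat_of_ord i == nat_of_ord j)%N by [].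
case: eqP => ?; first by subst; crush.
have -> : ((i < n) && (j < n))%N = false by apply/negbTE; lia.
done.
Qed.

Lemma sum_pick (F : fieldType) d (v : 'rV[F]_d.+1) a : (a < d.+1)%N ->
  \sum_(i < d.+1) v 0 i * ((nat_of_ord i == a)%N)%:R = v 0 (inord a).
Proof.
move=> ha; rewrite (bigD1 (inord a)) //= inordK // eqxx mulr1 big1 ?addr0 //.
move=> i ne; have -> : (nat_of_ord i == a) = false; last by rewrite mulr0.
apply/negbTE; apply: contra ne => /eqP e; apply/eqP/val_inj; by rewrite /= inordK.
Qed.

Lemma colM (F : fieldType) d (M : 'M[F]_d.+1) (v : 'rV_d.+1) (j : 'I_d.+1) a b s s' :
  (a < d.+1)%N -> (b < d.+1)%N ->
  (forall i : 'I_d.+1, M i j = ((nat_of_ord i == a)%N)%:R * s - ((nat_of_ord i == b)%N)%:R * s') ->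
  (v *m M) 0 j = v 0 (inord a) * s - v 0 (inord b) * s'.
Proof.
move=> ha hb hM; rewrite mxE.
under eq_bigr => i _ do rewrite hM mulrBr !mulrA.
by rewrite sumrB -!mulr_suml !sum_pick.
Qed.

Lemma colT (F : finFieldType) d n (v : 'rV[F]_d.+1) (j : 'I_d.+1) a s : (a < d.+1)%N ->
  (forall i : 'I_d.+1, t_elt F d.+1 n i j = ((nat_of_ord i == a)%N)%:R * s) ->
  (v *m (t_elt F d.+1 n - 1%:M)) 0 j = v 0 (inord a) * s - v 0 j.
Proof.
move=> ha ht; rewrite (@colM _ _ _ _ _ a j s 1) ?inord_val ?mulr1 //.
by move=> i; rewrite mxE ht !mxE mulr1.
Qed.

Lemma key_rank (F : finFieldType) (d n : nat) :
  (2 <= n)%N -> (n < d)%N -> (n == 2%N) || odd n ->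
  \rank (t_elt F d n - 1%:M) = n.-1.
Proof.
move=> n2 nd hn; case: d nd => [//|d] nd.
suff rk : \rank (kermx (t_elt F d.+1 n - 1%:M)) = (d.+1 - n).+1.
  move: rk; rewrite mxrank_ker; have := rank_leq_row (t_elt F d.+1 n - 1%:M).
  rewrite -subn1; lia.
set M := t_elt F d.+1 n - 1%:M.
have Mz : forall i j : 'I_d.+1, (n <= i)%N -> M i j = 0.
  by move=> i j hi; rewrite /M mxE t_out ?hi // !mxE subrr.
have hlt : forall k, (k < n)%N -> (k < d.+1)%N by lia.
case: (boolP (n == 2%N)) => [/eqP n2e | nn2].
  have h1 : (1 < d.+1)%N by lia.
  apply: (@ker_rank _ _ _ M (delta_mx 0 (inord 1))).
  - lia.
  - apply/eqP => h; have := congr1 (fun A : 'rV_d.+1 => A 0 (inord 1)) h.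
    by rewrite !mxE !eqxx /= => /eqP; rewrite oner_eq0.
  - move=> j hj; rewrite mxE eqxx /=; case: eqP => // e.
    by move: hj; rewrite e inordK //; lia.
  - exact: Mz.
  - rewrite -rowE; apply/rowP => j; rewrite !mxE n2e eqxx /=.
    by rewrite inordK //= subrr.
  move=> v vM.
  have c1 := @colM _ _ M v (inord 1) 0 0 1 0 (ltn0Sn _) (ltn0Sn _).
  rewrite vM mxE mulr1 mulr0 subr0 in c1.
  have {}c1 : v 0 (inord 0) = 0.
    rewrite c1 //; move=> i; rewrite /M mxE [t_elt _ _ _ _ _]mxE !mxE n2e eqxx /= inordK //=.
    rewrite mulr1 mulr0 subr0 eqxx andbT; case: eqP => [e|ne] /=; last by rewrite subrr.
    by rewrite -val_eqE /= inordK // e /= subr0.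
  exists (v 0 (inord 1)) => j hj; rewrite mxE eqxx /=.
  case: (eqVneq j (inord 1)) => [->|ne]; first by rewrite mulr1.
  rewrite mulr0 -c1; congr (v 0 _); apply/val_inj; rewrite /= inordK //.
  by move: ne; rewrite -val_eqE /= inordK //; lia.
have on : odd n by move: hn; rewrite (negbTE nn2).
have n3 : (3 <= n)%N by lia.
have h0 : (0 < d.+1)%N by [].
case: (boolP (2 \in [pchar F])) => p2.
  pose u : 'rV[F]_d.+1 := \row_(j < d.+1) ((nat_of_ord j < n)%N)%:R.
  apply: (@ker_rank _ _ _ M u).
  - lia.
  - apply/eqP => h; have := congr1 (fun A : 'rV_d.+1 => A 0 (inord 0)) h.
    rewrite !mxE inordK //; have -> : (0 < n)%N = true by lia.
    by move/eqP; rewrite oner_eq0.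
  - by move=> j hj; rewrite mxE; have -> : (j < n)%N = false by lia.
  - exact: Mz.
  - apply/rowP => j; rewrite [RHS]mxE; case: (ltnP j n) => hj.
      rewrite (@colT _ _ n u j (if nat_of_ord j == n.-1 then 0 else (nat_of_ord j).+1) 1).
      + rewrite !mxE inordK; last by case: ifP => _; lia.
        have -> : ((if nat_of_ord j == n.-1 then 0 else (nat_of_ord j).+1) < n)%N = true.
          by case: ifP => /eqP; lia.
        by rewrite hj mulr1 subrr.
      + by case: ifP => _; lia.
      + by move=> i; apply: t_z1.
    rewrite (@colT _ _ n u j j 1) ?inord_val ?mulr1 ?subrr //.
    by move=> i; rewrite t_out ?hj ?orbT // mulr1.
  move=> v vM.
  have step : forall k, (k.+1 < n)%N -> v 0 (inord k.+1) = v 0 (inord k).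
    move=> k hk; have := @colT _ _ n v (inord k) k.+1 1.
    rewrite vM mxE mulr1 => h; apply/eqP; rewrite -subr_eq0 -h //; first lia.
    move=> i; rewrite t_z1 ?inordK //; try lia.
    by have -> : (k == n.-1) = false by apply/negbTE/eqP; lia.
  have all : forall k, (k < n)%N -> v 0 (inord k) = v 0 (inord 0).
    elim=> [//|k IH] hk; rewrite step // IH //; lia.
  by exists (v 0 (inord 0)) => j hj; rewrite mxE hj mulr1 -(all j) // inord_val.
have two0 : (2%:R : F) != 0.
  by apply: contra p2 => h; rewrite inE /= h.
pose a2 (j : nat) := if j == 0%N then 0%N else if j == n.-1 then 1%N else j.+1.
pose s2 (j : nat) : F := if j == n.-1 then -1 else 1.
have a2lt : forall j, (j < n)%N -> (a2 j < d.+1)%N.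
  by move=> j hj; rewrite /a2; case: ifP => _; [|case: ifP => _]; lia.
apply: (@ker_rank _ _ _ M (delta_mx 0 (inord 0))).
- lia.
- apply/eqP => h; have := congr1 (fun A : 'rV_d.+1 => A 0 (inord 0)) h.
  by rewrite !mxE !eqxx /= => /eqP; rewrite oner_eq0.
- move=> j hj; rewrite mxE eqxx /=; case: eqP => // e.
  by move: hj; rewrite e inordK //; lia.
- exact: Mz.
- apply/rowP => j; rewrite [RHS]mxE; case: (ltnP j n) => hj.
    rewrite (@colT _ _ n (delta_mx 0 (inord 0)) j (a2 j) (s2 j)) ?a2lt //; last by move=> i; apply: t_z2.
    rewrite !mxE !eqxx /= -!val_eqE /= !inordK ?a2lt //.
    rewrite /a2 /s2; crush; by rewrite /= ?mulr1 ?mul0r ?subrr.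
  rewrite (@colT _ _ n (delta_mx 0 (inord 0)) j j 1) ?inord_val ?mulr1 ?subrr //.
  by move=> i; rewrite t_out ?hj ?orbT // mulr1.
move=> v vM.
have col : forall k, (k < n)%N -> v 0 (inord (a2 k)) * s2 k = v 0 (inord k).
  move=> k hk; have := @colT _ _ n v (inord k) (a2 k) (s2 k) (a2lt _ hk).
  rewrite vM mxE => h; apply/eqP; rewrite -subr_eq0 -h //.
  by move=> i; rewrite t_z2 ?inordK ?hlt.
have step : forall k, (1 <= k)%N -> (k.+1 < n)%N -> v 0 (inord k.+1) = v 0 (inord k).
  move=> k k1 hk; rewrite -(col k); last lia.
  rewrite /a2 /s2; have -> : (k == 0%N) = false by apply/negbTE/eqP; lia.
  have -> : (k == n.-1) = false by apply/negbTE/eqP; lia.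
  by rewrite mulr1.
have all : forall k, (1 <= k)%N -> (k < n)%N -> v 0 (inord k) = v 0 (inord 1).
  elim=> [//|k IH] k1 hk; case: (k =P 0%N) => [->//|ne].
  rewrite step ?IH //; lia.
have v1 : v 0 (inord 1) = 0.
  have := col n.-1; rewrite /a2 /s2 eqxx.
  have -> : (n.-1 == 0%N) = false by apply/negbTE/eqP; lia.
  rewrite all; [|lia|lia] => /(_ ltac:(lia)) /eqP.
  rewrite mulrN1 eq_sym -subr_eq0 opprK -mulr2n -mulr_natr mulf_eq0 (negbTE two0) orbF.
  by move/eqP.
exists (v 0 (inord 0)) => j hj; rewrite mxE eqxx /=.
case: (eqVneq j (inord 0)) => [->|ne]; first by rewrite mulr1.
rewrite mulr0 -v1 -(all j); first by rewrite inord_val.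
  by move: ne; rewrite -val_eqE /= inordK //; lia.
done.
Qed.


Lemma rank_conj (F : fieldType) d (E X : 'M[F]_d) : E \in unitmx ->
  \rank (invmx E *m X *m E) = \rank X.
Proof.
move=> uE; rewrite mxrankMfree ?row_free_unit // -mxrank_tr trmx_mul.
by rewrite mxrankMfree ?mxrank_tr // row_free_unit unitmx_tr unitmx_inv.
Qed.

Theorem lemma7p7 (F : finFieldType) (d n : nat) (E : 'M[F]_d) :
  (2 <= n)%N -> (n < d)%N -> (n == 2%N) || odd n ->
  E \in unitmx -> \det E = 1 ->
  let T := invmx E *m t_elt F d n *m E in
  weak_doubling n T ->
  ((1 <= \rank (Vn F d n :&: Fix T)%MS)%N /\
   ((nprime d n < d)%N -> \rank (Vn F d n :&: Fix T)%MS = 1%N)) /\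
  ((nprime d n < d)%N -> \rank (Fdn F d n :&: Fix T)%MS = (d - nprime d n)%N).
Proof.
move=> n2 nd hn uE _ T [_ [C1 C2]].
have TE : T - 1%:M = invmx E *m (t_elt F d n - 1%:M) *m E.
  by rewrite /T mulmxBr mulmxBl mulmx1 mulVmx.
have rFix : \rank (Fix T) = (d - (n - 1))%N.
  by rewrite /Fix mxrank_ker TE rank_conj // key_rank // subn1.
have rV : \rank (Vn F d n) = n by rewrite /Vn rank_pid_mx // ltnW.
have rFd : \rank (Fdn F d n) = (d - n)%N by rewrite /Fdn rank_copid_mx // ltnW.
have capV := mxrank_sum_cap (Vn F d n) (Fix T).
have sumV : (\rank (Vn F d n + Fix T) <= d)%N by apply: rank_leq_col.
split; [split|].
- lia.
- move=> hnd; have e : nprime d n = (2 * n - 1)%N by move: hnd; rewrite /nprime; lia.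
  move: C1; rewrite e => C1.
  have cap1 := mxrank_mul_ker (Vn F d n) (T - 1%:M).
  have sub1 : (Vn F d n + Vn F d n *m T <= Vn F d n + Vn F d n *m (T - 1%:M))%MS.
    rewrite addsmx_sub addsmxSl /=.
    have -> : Vn F d n *m T = Vn F d n *m (T - 1%:M) + Vn F d n.
      by rewrite mulmxBr mulmx1 subrK.
    by rewrite addrC addmx_sub_adds.
  have := mxrankS sub1; rewrite C1.
  have := mxrank_adds_leqif (Vn F d n) (Vn F d n *m (T - 1%:M)).
  move=> [le _]; rewrite /Fix in capV rFix sumV *; clearbody T; rewrite rV rFix in cap1 le capV; move=> H.
  set c := \rank (Vn F d n :&: kermx (T - 1%:M))%MS in cap1 capV *.
  set r := \rank (Vn F d n *m (T - 1%:M)) in cap1 le.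
  set s2 := \rank (Vn F d n + Vn F d n *m (T - 1%:M))%MS in le H.
  set s := \rank (Vn F d n + kermx (T - 1%:M))%MS in capV sumV.
  lia.
- move=> hnd; have C := C2 hnd; rewrite /Fix in rFix C *.
  have S := mxrank_sum_cap (Fdn F d n) (kermx (T - 1%:M)).
  have e : nprime d n = (2 * n - 1)%N by move: hnd; rewrite /nprime; lia.
  rewrite e; clearbody T.
  set c := \rank (Fdn F d n :&: kermx (T - 1%:M))%MS in S *.
  set s := \rank (Fdn F d n + kermx (T - 1%:M))%MS in S C.
  set k := \rank (kermx (T - 1%:M)) in S rFix.
  set f := \rank (Fdn F d n) in S rFd.
  lia.
Qed.
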